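(* Let $(x(t),p(t))$ be a solution of Hamilton's equations $x_j'=\partial H/\partial p_j$, $p_j'=-\partial H/\partial x_j$ ($1\le j\le n+1$) for $H(x,p)=\tfrac12\sum_{j=1}^{n+1}\xi_j(x)^2p_j^2$ with initial condition $x(0)=x^0$, $p(0)=p^0$. Define $R_{n+1}(t):=|p_{n+1}(t)|$ and recursively $R_j(t):=\sqrt{R_{j+1}(t)^2x_j(t)^{2\alpha_j}+p_j(t)^2}$ for $1\le j\le n$. Then each $R_j^2$ is constant in $t$, with $R_{n+1}^2=(p^0_{n+1})^2$ and $R_j^2=R_{j+1}^2(x^0_j)^{2\alpha_j}+(p^0_j)^2$ for $1\le j\le n$.
   Context: Here $n\ge1$, $\alpha=(\alpha_1,\dots,\alpha_n)\in(\mathbb{N}\cup\{0\})^n$, and $\xi_j(x)=\prod_{i=1}^{j-1}x_i^{\alpha_i}$ for $x\in\mathbb{R}^{n+1}$ (empty product $=1$); this $H$ is the sub-Riemannian Hamiltonian of the Grushin space $\mathbb{G}^{n+1}_\alpha$ generated by $X_j=\xi_j\partial_{x_j}$. *)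

(* Defs.v *)
From Stdlib Require Import Reals.
From Coquelicot Require Import Coquelicot.
Open Scope R_scope.

(* Points of R^{n+1} are functions nat -> R; coordinates 1..n+1 are used. *)

Fixpoint prod_upto (f : nat -> R) (k : nat) : R :=
  match k with O => 1 | S k' => prod_upto f k' * f (S k') end.

Fixpoint sum_upto (f : nat -> R) (k : nat) : R :=
  match k with O => 0 | S k' => sum_upto f k' + f (S k') end.

Definition xi (alpha : nat -> nat) (x : nat -> R) (j : nat) : R :=
  prod_upto (fun i => x i ^ alpha i) (j - 1).

Definition Ham (n : nat) (alpha : nat -> nat) (x p : nat -> R) : R :=
  / 2 * sum_upto (fun j => (xi alpha x j) ^ 2 * (p j) ^ 2) (n + 1).

Definition upd (v : nat -> R) (j : nat) (s : R) : nat -> R :=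
  fun i => if Nat.eqb i j then s else v i.

Definition is_hamilton_solution (n : nat) (alpha : nat -> nat) (a b : R)
  (x p : R -> nat -> R) : Prop :=
  forall t, a < t < b -> forall j, (1 <= j <= n + 1)%nat ->
    is_derive (fun s => x s j) t
      (Derive (fun q => Ham n alpha (x t) (upd (p t) j q)) (p t j)) /\
    is_derive (fun s => p s j) t
      (- Derive (fun q => Ham n alpha (upd (x t) j q) (p t)) (x t j)).

(* Rk k t : R_{n+1-k}(t); Rk 0 = |p_{n+1}|,
   Rk (k+1) = sqrt(Rk k ^2 * x_{n-k}^{2 alpha_{n-k}} + p_{n-k}^2) *)
Fixpoint Rk (n : nat) (alpha : nat -> nat) (x p : R -> nat -> R) (k : nat) (t : R) : R :=
  match k with
  | O => Rabs (p t (n + 1)%nat)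
  | S k' => sqrt ((Rk n alpha x p k' t) ^ 2 * (x t (n - k')%nat) ^ (2 * alpha (n - k')%nat)
                  + (p t (n - k')%nat) ^ 2)
  end.

Definition Rj (n : nat) (alpha : nat -> nat) (x p : R -> nat -> R) (j : nat) (t : R) : R :=
  Rk n alpha x p (n + 1 - j) t.

(* Main.v *)
Require Import Defs.
From Stdlib Require Import Reals Lra Lia.
From Coquelicot Require Import Coquelicot.
Open Scope R_scope.

Fixpoint Tk (n : nat) (alpha : nat -> nat) (X P : nat -> R) (k : nat) : R :=
  match k with
  | O => P (n + 1)%nat ^ 2
  | S k' => Tk n alpha X P k' * X (n - k')%nat ^ (2 * alpha (n - k')%nat) + P (n - k')%nat ^ 2
  end.

Lemma pow_even_nonneg (y : R) (a : nat) : 0 <= y ^ (2 * a).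
Proof. rewrite pow_mult. apply pow_le. nra. Qed.

Lemma Rk_Tk n alpha x p k t : Rk n alpha x p k t ^ 2 = Tk n alpha (x t) (p t) k.
Proof.
  induction k as [|k IH].
  - apply pow2_abs.
  - change (sqrt (Rk n alpha x p k t ^ 2 * x t (n - k)%nat ^ (2 * alpha (n - k)%nat)
                  + p t (n - k)%nat ^ 2) ^ 2 = Tk n alpha (x t) (p t) k * x t (n - k)%nat ^ (2 * alpha (n - k)%nat) + p t (n - k)%nat ^ 2).
    rewrite pow2_sqrt. now rewrite IH. clear IH.
    pose proof (pow_even_nonneg (x t (n - k)%nat) (alpha (n-k)%nat)).
    assert (0 <= Rk n alpha x p k t ^ 2) by nra. nra.
Qed.

Lemma prod_upto_ext f f' m : (forall i, (1 <= i <= m)%nat -> f i = f' i) ->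
  prod_upto f m = prod_upto f' m.
Proof.
  induction m as [|m IH]; intros H; simpl; auto.
  rewrite IH by (intros; apply H; lia). rewrite H by lia. reflexivity.
Qed.

Lemma sum_upto_ext f f' m : (forall i, (1 <= i <= m)%nat -> f i = f' i) ->
  sum_upto f m = sum_upto f' m.
Proof.
  induction m as [|m IH]; intros H; simpl; auto.
  rewrite IH by (intros; apply H; lia). rewrite H by lia. reflexivity.
Qed.

Lemma Tk_ext n alpha X P X' P' k :
  (forall i, (n + 1 - k <= i)%nat -> X i = X' i /\ P i = P' i) ->
  Tk n alpha X P k = Tk n alpha X' P' k.
Proof.
  induction k as [|k IH]; intros H; simpl.
  - destruct (H (n+1)%nat) as [_ ->]; [lia|]. reflexivity.
  - rewrite IH by (intros; apply H; lia).
    destruct (H (n-k)%nat) as [-> ->]; [lia|]. reflexivity.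
Qed.

Lemma xi_ext alpha X X' j : (forall i, (i < j)%nat -> X i = X' i) ->
  xi alpha X j = xi alpha X' j.
Proof.
  intros H. unfold xi. apply prod_upto_ext. intros i Hi. rewrite H by lia. reflexivity.
Qed.

Lemma ham_split n alpha X P k : (k <= n)%nat ->
  2 * Ham n alpha X P = sum_upto (fun j => xi alpha X j ^ 2 * P j ^ 2) (n - k)
     + xi alpha X (n + 1 - k) ^ 2 * Tk n alpha X P k.
Proof.
  induction k as [|k IH]; intros Hk.
  - unfold Ham. rewrite Nat.sub_0_r. simpl Tk. replace (n+1)%nat with (S n) by lia. simpl. field.
  - rewrite IH by lia.
    replace (n - k)%nat with (S (n - S k)) by lia.
    replace (n + 1 - k)%nat with (S (S (n - S k))) by lia.
    replace (n + 1 - S k)%nat with (S (n - S k)) by lia.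
    set (m := (n - S k)%nat). simpl sum_upto. simpl Tk.
    replace (n - k)%nat with (S m) by (unfold m; lia).
    unfold xi. replace (S (S m) - 1)%nat with (S m) by lia.
    replace (S m - 1)%nat with m by lia. simpl prod_upto.
    replace (alpha (S m) + (alpha (S m) + 0))%nat with (alpha (S m) * 2)%nat by lia. rewrite pow_mult. ring.
Qed.

Lemma upd_eq v j s : upd v j s j = s.
Proof. unfold upd. now rewrite Nat.eqb_refl. Qed.
Lemma upd_neq v j s i : i <> j -> upd v j s i = v i.
Proof. intros H. unfold upd. apply Nat.eqb_neq in H. now rewrite H. Qed.

Lemma ham_p_form n alpha X P j : (1 <= j <= n + 1)%nat ->
  exists A B, forall q, Ham n alpha X (upd P j q) = / 2 * (A + xi alpha X j ^ 2 * (B + q ^ 2)).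
Proof.
  intros Hj.
  exists (sum_upto (fun i => xi alpha X i ^ 2 * P i ^ 2) (j - 1)).
  destruct (n + 1 - j)%nat as [|k'] eqn:Hk.
  - exists 0. intros q.
    assert (E := ham_split n alpha X (upd P j q) 0 ltac:(lia)).
    replace (n - 0)%nat with (j - 1)%nat in E by lia.
    replace (n + 1 - 0)%nat with j in E by lia.
    simpl Tk in E. replace (n+1)%nat with j in E by lia. rewrite upd_eq in E.
    rewrite (sum_upto_ext _ (fun i => xi alpha X i ^ 2 * P i ^ 2)) in E.
    2:{ intros i Hi. rewrite upd_neq by lia. reflexivity. }
    apply (Rmult_eq_reg_l 2); [rewrite E; simpl; field | lra].
  - exists (Tk n alpha X P k' * X j ^ (2 * alpha j)). intros q.
    assert (E := ham_split n alpha X (upd P j q) (S k') ltac:(lia)).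
    replace (n - S k')%nat with (j - 1)%nat in E by lia.
    replace (n + 1 - S k')%nat with j in E by lia.
    simpl Tk in E. replace (n - k')%nat with j in E by lia. rewrite upd_eq in E.
    rewrite (sum_upto_ext _ (fun i => xi alpha X i ^ 2 * P i ^ 2)) in E.
    2:{ intros i Hi. rewrite upd_neq by lia. reflexivity. }
    rewrite (Tk_ext n alpha X (upd P j q) X P) in E.
    2:{ intros i Hi. split; [reflexivity|]. rewrite upd_neq by lia. reflexivity. }
    apply (Rmult_eq_reg_l 2); [rewrite E; simpl; field | lra].
Qed.

Lemma ham_x_form n alpha X P j : (1 <= j <= n)%nat ->
  exists A, forall q, Ham n alpha (upd X j q) P =
    / 2 * (A + xi alpha X j ^ 2 * (Tk n alpha X P (n - j) * q ^ (2 * alpha j) + P j ^ 2)).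
Proof.
  intros Hj.
  exists (sum_upto (fun i => xi alpha X i ^ 2 * P i ^ 2) (j - 1)). intros q.
  assert (E := ham_split n alpha (upd X j q) P (S (n - j)) ltac:(lia)).
  replace (n - S (n - j))%nat with (j - 1)%nat in E by lia.
  replace (n + 1 - S (n - j))%nat with j in E by lia.
  simpl Tk in E. replace (n - (n - j))%nat with j in E by lia. rewrite upd_eq in E.
  rewrite (sum_upto_ext _ (fun i => xi alpha X i ^ 2 * P i ^ 2)) in E.
  2:{ intros i Hi. rewrite (xi_ext alpha (upd X j q) X) by (intros; apply upd_neq; lia).
      reflexivity. }
  rewrite (xi_ext alpha (upd X j q) X) in E by (intros; apply upd_neq; lia).
  rewrite (Tk_ext n alpha (upd X j q) P X P) in E.
  2:{ intros i Hi. split; [|reflexivity]. rewrite upd_neq by lia. reflexivity. }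
  apply (Rmult_eq_reg_l 2); [rewrite E; simpl; field | lra].
Qed.

Lemma ham_x_last n alpha X P q : Ham n alpha (upd X (n + 1) q) P = Ham n alpha X P.
Proof.
  unfold Ham. f_equal. apply sum_upto_ext. intros i Hi.
  rewrite (xi_ext alpha (upd X (n+1) q) X) by (intros; apply upd_neq; lia). reflexivity.
Qed.

Lemma derive_p n alpha X P j q0 : (1 <= j <= n + 1)%nat ->
  Derive (fun q => Ham n alpha X (upd P j q)) q0 = xi alpha X j ^ 2 * q0.
Proof.
  intros Hj. destruct (ham_p_form n alpha X P j Hj) as [A [B HF]].
  rewrite (Derive_ext _ _ _ HF). apply is_derive_unique. auto_derive; auto. field.
Qed.

Lemma derive_x n alpha X P j q0 : (1 <= j <= n)%nat ->
  Derive (fun q => Ham n alpha (upd X j q) P) q0 =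
  / 2 * xi alpha X j ^ 2 * Tk n alpha X P (n - j) * (INR (2 * alpha j) * q0 ^ Init.Nat.pred (2 * alpha j)).
Proof.
  intros Hj. destruct (ham_x_form n alpha X P j Hj) as [A HF].
  rewrite (Derive_ext _ _ _ HF). apply is_derive_unique. auto_derive; auto.
  replace (alpha j + (alpha j + 0))%nat with (2 * alpha j)%nat by lia. simpl. ring.
Qed.

Lemma derive_x_last n alpha X P q0 :
  Derive (fun q => Ham n alpha (upd X (n + 1) q) P) q0 = 0.
Proof.
  rewrite (Derive_ext _ _ _ (ham_x_last n alpha X P)). apply Derive_const.
Qed.

Lemma const_on a b f : a < 0 < b -> (forall s, a < s < b -> is_derive f s 0) ->
  forall t, a < t < b -> f t = f 0.
Proof.
  intros Hab Hd t Ht.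
  destruct (MVT_gen f 0 t (fun _ => 0)) as [c [_ Hc]].
  - intros s Hs. apply Hd. pose proof (Rmin_l 0 t). pose proof (Rmin_r 0 t).
    pose proof (Rmax_l 0 t). pose proof (Rmax_r 0 t).
    destruct (Rle_dec 0 t).
    + rewrite Rmin_left in Hs by lra. rewrite Rmax_right in Hs by lra. lra.
    + rewrite Rmin_right in Hs by lra. rewrite Rmax_left in Hs by lra. lra.
  - intros s Hs. apply continuity_pt_filterlim. apply (@ex_derive_continuous R_AbsRing R_NormedModule f s).
    eexists. apply Hd.
    destruct (Rle_dec 0 t).
    + rewrite Rmin_left in Hs by lra. rewrite Rmax_right in Hs by lra. lra.
    + rewrite Rmin_right in Hs by lra. rewrite Rmax_left in Hs by lra. lra.
  - lra.
Qed.

Lemma Tk_const n alpha a b x p : a < 0 < b ->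
  is_hamilton_solution n alpha a b x p ->
  forall k, (k <= n)%nat -> forall t, a < t < b ->
  Tk n alpha (x t) (p t) k = Tk n alpha (x 0) (p 0) k.
Proof.
  intros Hab Hsol k. induction k as [|k IH]; intros Hk t Ht.
  - simpl Tk.
    assert (E : p t (n+1)%nat = p 0 (n+1)%nat).
    { apply (const_on a b (fun s => p s (n+1)%nat) Hab); auto.
      intros s Hs. destruct (Hsol s Hs (n+1)%nat ltac:(lia)) as [_ H2].
      rewrite derive_x_last in H2. rewrite Ropp_0 in H2. exact H2. }
    now rewrite E.
  - set (j := (n - k)%nat).
    set (c0 := Tk n alpha (x 0) (p 0) k).
    set (m := (2 * alpha j)%nat).
    assert (E : (fun s => c0 * x s j ^ m + p s j ^ 2) t = (fun s => c0 * x s j ^ m + p s j ^ 2) 0).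
    { apply (const_on a b (fun s => c0 * x s j ^ m + p s j ^ 2) Hab); auto.
      intros s Hs. destruct (Hsol s Hs j ltac:(unfold j; lia)) as [H1 H2].
      rewrite derive_p in H1 by (unfold j; lia).
      rewrite derive_x in H2 by (unfold j; lia).
      replace (n - j)%nat with k in H2 by (unfold j; lia).
      rewrite (IH ltac:(lia) s Hs) in H2. fold c0 in H2. fold m in H2.
      assert (D := is_derive_plus _ _ _ _ _
                 (is_derive_scal _ _ c0 _ (is_derive_pow _ m _ _ H1))
                 (is_derive_pow _ 2 _ _ H2)).
      simpl in D. unfold plus in D. simpl in D.
      match type of D with is_derive _ _ ?v => replace 0 with v by (simpl; field) end.
      exact D. }
    simpl in E. simpl Tk. fold j. rewrite (IH ltac:(lia) t Ht). fold c0.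
    change (c0 * x t j ^ m + p t j ^ 2 = c0 * x 0 j ^ m + p 0 j ^ 2).
    exact E.
Qed.

Theorem mainTheorem7 (n : nat) (alpha : nat -> nat) (a b : R)
  (x p : R -> nat -> R) (x0 p0 : nat -> R) :
  (1 <= n)%nat ->
  a < 0 < b ->
  is_hamilton_solution n alpha a b x p ->
  (forall j, (1 <= j <= n + 1)%nat -> x 0 j = x0 j /\ p 0 j = p0 j) ->
  (forall j t, (1 <= j <= n + 1)%nat -> a < t < b ->
     (Rj n alpha x p j t) ^ 2 = (Rj n alpha x p j 0) ^ 2) /\
  (forall t, a < t < b -> (Rj n alpha x p (n + 1) t) ^ 2 = (p0 (n + 1)%nat) ^ 2) /\
  (forall j t, (1 <= j <= n)%nat -> a < t < b ->
     (Rj n alpha x p j t) ^ 2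
       = (Rj n alpha x p (j + 1) t) ^ 2 * (x0 j) ^ (2 * alpha j) + (p0 j) ^ 2).
Proof.
  intros Hn Hab Hsol Hinit.
  assert (P1 : forall j t, (1 <= j <= n + 1)%nat -> a < t < b ->
     (Rj n alpha x p j t) ^ 2 = (Rj n alpha x p j 0) ^ 2).
  { intros j t Hj Ht. unfold Rj. rewrite !Rk_Tk. apply (Tk_const n alpha a b); auto; lia. }
  split; [exact P1|]. split.
  - intros t Ht. unfold Rj. rewrite Rk_Tk. replace (n + 1 - (n + 1))%nat with 0%nat by lia.
    rewrite (Tk_const n alpha a b x p Hab Hsol 0 ltac:(lia) t Ht). simpl Tk.
    destruct (Hinit (n+1)%nat ltac:(lia)) as [_ ->]. reflexivity.
  - intros j t Hj Ht. rewrite (P1 j t ltac:(lia) Ht). unfold Rj. rewrite !Rk_Tk.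
    replace (n + 1 - (j + 1))%nat with (n - j)%nat by lia.
    replace (n + 1 - j)%nat with (S (n - j)) by lia.
    rewrite (Tk_const n alpha a b x p Hab Hsol (n - j) ltac:(lia) t Ht).
    simpl Tk. replace (n - (n - j))%nat with j by lia.
    destruct (Hinit j ltac:(lia)) as [-> ->]. reflexivity.
Qed.
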